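(* Let $d\ge1$, $\delta>0$, $L>0$, and let $F$ be a real-valued function that is continuously differentiable on an open set containing $[-\delta,1+\delta]^d$ and whose gradient is $L$-Lipschitz on $[-\delta,1+\delta]^d$. Then for every $\epsilon>0$ there exist integers $n_1,n_2\ge1$, scalars $t_1,t_2>0$, matrices $\boldsymbol{W}_k\in\mathbb{R}^{n_k\times d}$ and vectors $\boldsymbol{a}_k\in\mathbb{R}^{n_k}$, $\boldsymbol{c}_k\in\mathbb{R}^d$ ($k=1,2$) such that, with $g_k(\boldsymbol{x})=\boldsymbol{W}_k^\top\mathrm{softmax}(t_k(\boldsymbol{W}_k\boldsymbol{x}+\boldsymbol{a}_k))+\boldsymbol{c}_k$, $$\sup_{\boldsymbol{x}\in[0,1]^d}\|\nabla F(\boldsymbol{x})-(g_1(\boldsymbol{x})-g_2(\boldsymbol{x}))\|<\epsilon .$$ Moreover $g_1-g_2$ is the gradient of a $C^1$ function on $\mathbb{R}^d$.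
   Context: $\mathrm{softmax}(\boldsymbol{z})_i=e^{z_i}/\sum_j e^{z_j}$. $\|\cdot\|$ is the Euclidean norm. *)

(* Defs.v *)
From HB Require Import structures.
From mathcomp Require Import all_boot all_order all_algebra.
From mathcomp Require Import all_classical all_reals all_analysis.
Set Implicit Arguments. Unset Strict Implicit. Unset Printing Implicit Defensive.
Import Order.TTheory GRing.Theory Num.Theory.
Import numFieldNormedType.Exports.
Local Open Scope classical_set_scope.
Local Open Scope ring_scope.

(* Euclidean norm on R^d (the library's norm on matrices is the max norm). *)
Definition enorm {R : realType} {d : nat} (v : 'rV[R]_d) : R :=
  Num.sqrt (\sum_(i < d) (v ord0 i) ^+ 2).

Definition softmax {R : realType} {n : nat} (z : 'rV[R]_n) : 'rV[R]_n :=
  \row_(i < n) (expR (z ord0 i) / \sum_(j < n) expR (z ord0 j)).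

Definition grad {R : realType} {d : nat} (F : 'rV[R]_d -> R) (x : 'rV[R]_d)
  : 'rV[R]_d :=
  \row_(i < d) ('D_(delta_mx ord0 i) F x).

Definition cube {R : realType} {d : nat} (a b : R) : set 'rV[R]_d :=
  [set x | forall i : 'I_d, a <= x ord0 i <= b].

(* g(x) = W^T softmax(t (W x + a)) + c, written with row vectors:
   W x = x *m W^T,  W^T s = s *m W. *)
Definition softmax_layer {R : realType} {n d : nat} (t : R) (W : 'M[R]_(n, d))
  (a : 'rV[R]_n) (c : 'rV[R]_d) (x : 'rV[R]_d) : 'rV[R]_d :=
  softmax (t *: (x *m W^T + a)) *m W + c.

(* Main.v *)
Set Warnings "-notation-overridden,-ambiguous-paths,-notation-incompatible-prefix,-deprecated".
Require Import Defs.
From HB Require Import structures.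
From mathcomp Require Import all_boot all_order all_algebra.
From mathcomp Require Import all_classical all_reals all_analysis.
Import Order.TTheory GRing.Theory Num.Theory.
Import numFieldNormedType.Exports.
Local Open Scope classical_set_scope.
Local Open Scope ring_scope.
From mathcomp Require Import lra ring.

Section Norms.
Context {R : realType}.
Context {d : nat}.
Implicit Types u v w : 'rV[R]_d.

Definition dot u v : R := \sum_(i < d) u ord0 i * v ord0 i.

Lemma dot_ge0 u : 0 <= dot u u.
Proof. by apply: sumr_ge0 => i _; rewrite -expr2 sqr_ge0. Qed.

Lemma enormE u : enorm u = Num.sqrt (dot u u).
Proof. by rewrite /enorm /dot; congr Num.sqrt; apply: eq_bigr => i _; rewrite expr2. Qed.

Lemma enorm_ge0 u : 0 <= enorm u.
Proof. by rewrite enormE sqrtr_ge0. Qed.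

Lemma enorm_sq u : enorm u ^+ 2 = dot u u.
Proof. by rewrite enormE sqr_sqrtr // dot_ge0. Qed.

Lemma dotC u v : dot u v = dot v u.
Proof. by apply: eq_bigr => i _; rewrite mulrC. Qed.

Lemma dotDl u v w : dot (u + v) w = dot u w + dot v w.
Proof. by rewrite /dot -big_split; apply: eq_bigr => i _; rewrite !mxE mulrDl. Qed.

Lemma dotNl u w : dot (- u) w = - dot u w.
Proof. by rewrite /dot -sumrN; apply: eq_bigr => i _; rewrite !mxE mulNr. Qed.

Lemma dotBl u v w : dot (u - v) w = dot u w - dot v w.
Proof. by rewrite dotDl dotNl. Qed.

Lemma dotZl (k : R) u w : dot (k *: u) w = k * dot u w.
Proof. by rewrite /dot mulr_sumr; apply: eq_bigr => i _; rewrite !mxE mulrA. Qed.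

Lemma dotDr u v w : dot w (u + v) = dot w u + dot w v.
Proof. by rewrite dotC dotDl !(dotC w). Qed.
Lemma dotBr u v w : dot w (u - v) = dot w u - dot w v.
Proof. by rewrite dotC dotBl !(dotC w). Qed.
Lemma dotZr (k : R) u w : dot w (k *: u) = k * dot w u.
Proof. by rewrite dotC dotZl dotC. Qed.

Lemma lagrange u v : dot u v ^+ 2 <= dot u u * dot v v.
Proof.
pose a : 'I_d -> R := fun i => u ord0 i; pose b : 'I_d -> R := fun i => v ord0 i.
have E1 : dot u u * dot v v = \sum_(i < d) \sum_(j < d) (a i * a i) * (b j * b j).
  by rewrite /dot mulr_suml; apply: eq_bigr => i _; rewrite mulr_sumr.
have E2 : dot u u * dot v v = \sum_(i < d) \sum_(j < d) (a j * a j) * (b i * b i).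
  by rewrite mulrC /dot mulr_suml; apply: eq_bigr => i _; rewrite mulr_sumr;
     apply: eq_bigr => j _; rewrite mulrC.
have E3 : dot u v ^+ 2 = \sum_(i < d) \sum_(j < d) (a i * b i) * (a j * b j).
  by rewrite expr2 /dot mulr_suml; apply: eq_bigr => i _; rewrite mulr_sumr.
have H : 0 <= \sum_(i < d) \sum_(j < d) (a i * b j - a j * b i) ^+ 2.
  by apply: sumr_ge0 => i _; apply: sumr_ge0 => j _; rewrite sqr_ge0.
have E : \sum_(i < d) \sum_(j < d) (a i * b j - a j * b i) ^+ 2 =
   \sum_(i < d) (\sum_(j < d) (a i * a i) * (b j * b j) + \sum_(j < d) (a j * a j) * (b i * b i)
     - 2 * \sum_(j < d) (a i * b i) * (a j * b j)).
  apply: eq_bigr => i _; rewrite mulr_sumr -big_split -sumrB; apply: eq_bigr => j _.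
  move: (a i) (b j) (a j) (b i) => x1 x2 x3 x4 /=; ring.
rewrite E sumrB big_split /= -mulr_sumr -E1 -E2 -E3 in H.
lra.
Qed.

Lemma cauchy_schwarz u v : dot u v <= enorm u * enorm v.
Proof.
have H := lagrange u v.
rewrite -!enorm_sq in H.
have p0 : 0 <= enorm u * enorm v by rewrite mulr_ge0 // enorm_ge0.
set Q := dot u v in H *; set p := enorm u * enorm v in p0 *.
have H' : Q ^+ 2 <= p ^+ 2 by rewrite /p exprMn.
nra.
Qed.

Lemma cauchy_schwarz_abs u v : `|dot u v| <= enorm u * enorm v.
Proof.
have [h|h] := lerP 0 (dot u v).
  by rewrite ger0_norm // cauchy_schwarz.
rewrite ltr0_norm // -dotNl.
have := cauchy_schwarz (- u) v.
suff -> : enorm (- u) = enorm u by [].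
by rewrite !enormE dotNl [dot u _]dotC dotNl opprK.
Qed.

Lemma enormN u : enorm (- u) = enorm u.
Proof. by rewrite !enormE dotNl [dot u _]dotC dotNl opprK. Qed.

Lemma enormB u v : enorm (u - v) = enorm (v - u).
Proof. by rewrite -enormN opprB. Qed.

Lemma enormZ (k : R) u : enorm (k *: u) = `|k| * enorm u.
Proof.
by rewrite !enormE dotZl dotZr mulrA -expr2 sqrtrM ?sqr_ge0 // sqrtr_sqr.
Qed.

Lemma enormD u v : enorm (u + v) <= enorm u + enorm v.
Proof.
have h0 : 0 <= enorm u + enorm v by rewrite addr_ge0 // enorm_ge0.
rewrite [X in X <= _]enormE -(ger0_norm h0) -sqrtr_sqr ler_sqrt ?sqr_ge0 //.
rewrite dotDl !dotDr sqrrD !enorm_sq (dotC v u).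
have := cauchy_schwarz u v; lra.
Qed.

Lemma enorm0 : enorm (0 : 'rV[R]_d) = 0.
Proof. by rewrite -(scale0r 0) enormZ normr0 mul0r. Qed.

Lemma enorm_sum (I : Type) (r : seq I) (P : pred I) (f : I -> 'rV[R]_d) :
  enorm (\sum_(i <- r | P i) f i) <= \sum_(i <- r | P i) enorm (f i).
Proof.
apply: (big_ind2 (fun a b => enorm a <= b)); first by rewrite enorm0.
  by move=> x1 x2 y1 y2 h1 h2; apply: le_trans (enormD _ _) _; apply: lerD.
by [].
Qed.

End Norms.


Section Soft.
Variable R : realType.
Variable d : nat.

Lemma softmax_conc n (z : 'I_n -> R) (w : 'I_n -> 'rV[R]_d) (u : 'rV[R]_d)
  (al be Ga : R) (m : 'I_n) :
  0 <= al ->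
  (forall j, enorm (w j - u) <= Ga) ->
  (forall j, enorm (w j - u) <= al \/ z j <= z m - be) ->
  enorm (\sum_j (expR (z j) / \sum_k expR (z k)) *: w j - u)
    <= al + n%:R * (expR (- be) * Ga).
Proof.
move=> al0 hG hj.
set S := \sum_k expR (z k).
have Sm : expR (z m) <= S.
  rewrite /S (bigD1 m) //= lerDl; apply: sumr_ge0 => k _; exact: expR_ge0.
have S0 : 0 < S by apply: lt_le_trans Sm; exact: expR_gt0.
set s := fun j => expR (z j) / S.
have s0 j : 0 <= s j by rewrite /s divr_ge0 // ?expR_ge0 // ltW.
have s1 : \sum_j s j = 1 by rewrite /s -mulr_suml divff // gt_eqF.
have -> : \sum_j (expR (z j) / S) *: w j - u = \sum_j s j *: (w j - u).
  rewrite [X in _ - X](_ : u = \sum_j s j *: u); last by rewrite -scaler_suml s1 scale1r.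
  by rewrite -sumrB; apply: eq_bigr => j _; rewrite scalerBr.
apply: (le_trans (enorm_sum _ _ _ _)).
have Ga0 : 0 <= Ga by apply: le_trans (hG m); exact: enorm_ge0.
apply: (@le_trans _ _ (\sum_(j < n) (s j * al + expR (- be) * Ga))).
  apply: ler_sum => j _; rewrite enormZ ger0_norm //.
  case: (hj j) => h.
    apply: le_trans (ler_wpM2l (s0 j) h) _.
    by rewrite lerDl mulr_ge0 // expR_ge0.
  have sb : s j <= expR (- be).
    rewrite /s; apply: (@le_trans _ _ (expR (z j) / expR (z m))).
      apply: ler_wpM2l; first exact: expR_ge0.
      by rewrite lef_pV2 ?posrE ?expR_gt0.
    by rewrite -expRB ler_expR; lra.
  apply: le_trans (_ : expR (- be) * Ga <= _); last by rewrite lerDr mulr_ge0.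
  apply: le_trans (ler_wpM2l (s0 j) (hG j)) _.
  exact: ler_wpM2r.
rewrite big_split /= -mulr_suml s1 mul1r sumr_const card_ord mulr_natl.
by [].
Qed.

End Soft.


Section Layer.
Context {R : realType} {d : nat}.

Definition mkW {n} (w : 'I_n -> 'rV[R]_d) : 'M[R]_(n, d) := \matrix_(j < n, i < d) (w j) ord0 i.

Lemma row_mkW n (w : 'I_n -> 'rV[R]_d) j : row j (mkW w) = w j.
Proof. by apply/rowP => i; rewrite !mxE. Qed.

Lemma softmax_layerE n t (W : 'M[R]_(n, d)) a c x :
  softmax_layer t W a c x =
  \sum_j (expR (t * (dot x (row j W) + a ord0 j)) /
          \sum_k expR (t * (dot x (row k W) + a ord0 k))) *: row j W + c.
Proof.
apply/rowP => i; rewrite /softmax_layer /softmax !mxE summxE.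
congr (_ + _); apply: eq_bigr => j _; rewrite mxE [in RHS]mxE [in RHS]mxE.
have E k : (t *: (x *m W^T + a)) ord0 k = t * (dot x (row k W) + a ord0 k).
  by rewrite !mxE /dot; congr (_ * (_ + _)); apply: eq_bigr => l _; rewrite !mxE.
congr (expR _ / _ * _); first exact: E.
by apply: eq_bigr => k _; rewrite E.
Qed.


Lemma gap_eq (F : 'rV[R]_d -> R) (V : 'rV[R]_d -> 'rV[R]_d) (K : R) x p :
  dot x (V p + K *: p) + (F p + K / 2 * dot p p - dot (V p + K *: p) p) =
  (F x + K / 2 * dot x x) -
  ((F x - F p - dot (V p) (x - p)) + K / 2 * dot (x - p) (x - p)).
Proof.
rewrite !dotBl !dotBr !dotDl !dotDr !dotZl !dotZr.
rewrite [dot x (V p)]dotC [dot p x]dotC.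
move: (dot (V p) x) (dot x p) (dot p p) (dot (V p) p) (dot x x) (F p) (F x) => a1 a2 a3 a4 a5 a6 a7; by field.
Qed.

Definition cube01 (x : 'rV[R]_d) := forall i : 'I_d, 0 <= x ord0 i <= 1.

Lemma dist_le_d x p : cube01 x -> cube01 p -> dot (x - p) (x - p) <= d%:R.
Proof.
move=> hx hp; apply: (@le_trans _ _ (\sum_(i < d) (1 : R))); last first.
  by rewrite sumr_const card_ord.
apply: ler_sum => i _; rewrite !mxE.
have := hx i; have := hp i; nra.
Qed.

Lemma layer_approx (F : 'rV[R]_d -> R) (V : 'rV[R]_d -> 'rV[R]_d) (L K : R)
  n (P : 'I_n -> 'rV[R]_d) (h2 rho t : R) :
  0 < L -> K = 4 * L -> 0 < rho -> 0 < t -> 6 * h2 <= rho ^+ 2 ->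
  (forall j, cube01 (P j)) ->
  (forall x, cube01 x -> exists m, dot (x - P m) (x - P m) <= h2) ->
  (forall x p, cube01 x -> cube01 p ->
     `|F x - F p - dot (V p) (x - p)| <= L * dot (x - p) (x - p)) ->
  (forall x p, cube01 x -> cube01 p -> enorm (V x - V p) <= L * enorm (x - p)) ->
  forall x, cube01 x ->
  enorm (softmax_layer t (mkW (fun j => V (P j) + K *: P j))
           (\row_j (F (P j) + K / 2 * dot (P j) (P j) - dot (V (P j) + K *: P j) (P j)))
           0 x - (V x + K *: x))
  <= 5 * L * rho + n%:R * (expR (- (t * (L * rho ^+ 2 / 2))) * (5 * L * Num.sqrt d%:R)).
Proof.
move=> L0 -> rho0 t0 hh hP hgrid hF hV x hx.
rewrite softmax_layerE addr0.
have [m hm] := hgrid x hx.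
set w := fun j => V (P j) + 4 * L *: P j.
under eq_bigr => j _ do rewrite row_mkW.
under eq_bigr => j _ do under eq_bigr => k _ do rewrite row_mkW.
under eq_bigr => j _ do under eq_bigr => k _ do rewrite mxE.
under eq_bigr => j _ do rewrite mxE.
set Phi := F x + 4 * L / 2 * dot x x.
set gap := fun j => (F x - F (P j) - dot (V (P j)) (x - P j)) +
                     4 * L / 2 * dot (x - P j) (x - P j).
have hz j : dot x (V (P j) + 4 * L *: P j) +
      (F (P j) + 4 * L / 2 * dot (P j) (P j) - dot (V (P j) + 4 * L *: P j) (P j))
      = Phi - gap j by rewrite gap_eq.
under eq_bigr => j _ do rewrite hz.
under eq_bigr => j _ do under eq_bigr => k _ do rewrite hz.
have gapb j : L * dot (x - P j) (x - P j) <= gap j <= 3 * L * dot (x - P j) (x - P j).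
  have := hF x (P j) hx (hP j); rewrite /gap.
  set E := F x - _ - _; set r := dot _ _ => hE.
  have e2 : 4 * L / 2 * r = 2 * (L * r) by field.
  rewrite e2; move: hE; rewrite ler_norml; set Lr := L * r.
  have -> : 3 * L * r = 3 * Lr by rewrite /Lr mulrA.
  move=> /andP[g1 g2]; apply/andP; split; lra.
have hw j : enorm (V (P j) + 4 * L *: P j - (V x + 4 * L *: x)) <= 5 * L * enorm (x - P j).
  have -> : V (P j) + 4 * L *: P j - (V x + 4 * L *: x) =
            (V (P j) - V x) + 4 * L *: (P j - x) by rewrite opprD addrACA scalerBr.
  apply: le_trans (enormD _ _) _; rewrite enormZ ger0_norm; last by lra.
  rewrite (enormB (P j)).
  have := hV (P j) x (hP j) hx; rewrite (enormB (P j)); lra.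
apply: (@softmax_conc R d n (fun j => t * (Phi - gap j)) _ _ _ _ _ m).
- by rewrite !mulr_ge0 // ltW.
- move=> j; apply: le_trans (hw j) _; apply: ler_wpM2l; first lra.
  rewrite enormE ler_sqrt ?ler0n //; exact: dist_le_d.
move=> j; have [hle|hlt] := lerP (enorm (x - P j)) rho.
  by left; apply: le_trans (hw j) _; apply: ler_wpM2l; first lra.
right.
have r2 : rho ^+ 2 < dot (x - P j) (x - P j).
  by rewrite -enorm_sq ltr_pXn2r // nnegrE ?enorm_ge0 // ltW.
have A1 : L * rho ^+ 2 <= L * dot (x - P j) (x - P j) by rewrite ler_wpM2l // ?ltW.
have A2 : L * dot (x - P m) (x - P m) <= L * h2 by rewrite ler_wpM2l // ltW.
have A3 : L * (6 * h2) <= L * rho ^+ 2 by rewrite ler_wpM2l // ltW.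
have /andP[g1 _] := gapb j; have /andP[_ g2] := gapb m.
have G : 0 <= t * (gap j - gap m - L * rho ^+ 2 / 2).
  apply: mulr_ge0; first exact: ltW.
  lra.
lra.
Qed.

End Layer.


Section Taylor.
Context {R : realType} {d : nat}.

Lemma dir_grad (F : 'rV[R]_d -> R) y v : differentiable F y ->
  'D_v F y = dot (grad F y) v.
Proof.
move=> dF; rewrite deriveE // {1}(row_sum_delta v) linear_sum /dot.
by apply: eq_bigr => i _; rewrite linearZ /= mxE -deriveE // [RHS]mulrC.
Qed.

Lemma seg_cube (x p : 'rV[R]_d) (s : R) : cube01 x -> cube01 p -> 0 <= s <= 1 ->
  cube01 (p + s *: (x - p)).
Proof.
move=> hx hp /andP[s0 s1] i; rewrite !mxE.
have := hx i; have := hp i; move=> /andP[a1 a2] /andP[b1 b2].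
apply/andP; split; nra.
Qed.

Lemma seg_derive (F : 'rV[R]_d -> R) (x p : 'rV[R]_d) (s : R) :
  differentiable F (p + s *: (x - p)) ->
  is_derive s 1 (fun s => F (p + s *: (x - p))) ('D_(x - p) F (p + s *: (x - p))).
Proof.
move=> dF.
have E : (fun h : R => h^-1 *: (((fun s => F (p + s *: (x - p))) \o shift s) (h *: 1)
                                - F (p + s *: (x - p)))) =
         (fun h : R => h^-1 *: ((F \o shift (p + s *: (x - p))) (h *: (x - p))
                                - F (p + s *: (x - p)))).
  apply: funext => h /=; congr (_ *: (F _ - _)).
  by rewrite /shift /= [h *: 1]mulr1 scalerDl addrCA addrA.
apply: DeriveDef.
  by rewrite /derivable E; exact: diff_derivable.
by rewrite /derive E.
Qed.

Lemma taylor_bound (F : 'rV[R]_d -> R) (L : R) :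
  0 <= L ->
  (forall x, cube01 x -> differentiable F x) ->
  (forall x p, cube01 x -> cube01 p -> enorm (grad F x - grad F p) <= L * enorm (x - p)) ->
  forall x p, cube01 x -> cube01 p ->
    `|F x - F p - dot (grad F p) (x - p)| <= L * dot (x - p) (x - p).
Proof.
move=> L0 dF hL x p hx hp.
set f := fun s => F (p + s *: (x - p)).
have hd (s : R) : 0 <= s <= 1 -> is_derive (s : R^o) 1 f (dot (grad F (p + s *: (x - p))) (x - p)).
  move=> hs; have dFs := dF _ (seg_cube _ _ _ hx hp hs).
  rewrite -dir_grad //; exact: seg_derive.
have [c hc E] : exists2 c, c \in `[0, 1]%R &
    f 1 - f 0 = dot (grad F (p + c *: (x - p))) (x - p) * (1 - 0).
  apply: MVT_segment => //.
    move=> s; rewrite in_itv /= => /andP[s0 s1]; apply: hd; apply/andP; split; exact: ltW.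
  apply: continuous_in_subspaceT => s; rewrite inE /= in_itv /= => hs.
  apply: differentiable_continuous; apply/derivable1_diffP.
  by have [] := hd s hs.
move: hc; rewrite in_itv /= => hc.
move: E; rewrite /f scale1r scale0r addr0 subr0 mulr1 (addrC p (x - p)) subrK => ->.
rewrite -dotBl.
apply: le_trans (cauchy_schwarz_abs _ _) _.
apply: (@le_trans _ _ (L * enorm (c *: (x - p)) * enorm (x - p))).
  apply: ler_wpM2r; first exact: enorm_ge0.
  have := hL _ _ (seg_cube _ _ _ hx hp hc) hp; by rewrite [p + _]addrC addrK.
rewrite enormZ ger0_norm; last by case/andP: hc.
rewrite -enorm_sq expr2 [L * (_ * _)]mulrA; apply: ler_wpM2r; first exact: enorm_ge0.
apply: ler_wpM2l => //; case/andP: hc => _ c1.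
by rewrite ler_piMl // enorm_ge0.
Qed.

End Taylor.


Section LSE.
Context {R : realType} {d : nat}.

Lemma chain (f : 'rV[R]_d -> R) (g : R -> R) x v dg :
  differentiable f x -> is_derive (f x : R^o) 1 g dg ->
  differentiable (g \o f) x /\ 'D_v (g \o f) x = dg * 'D_v f x.
Proof.
move=> df hg.
have dg' : differentiable g (f x) by apply/derivable1_diffP; case: hg.
have dgf : differentiable (g \o f) x by exact: differentiable_comp.
split => //.
rewrite deriveE // diff_comp //= diff1E // derive1E derive_val -deriveE //.
by rewrite mulrC.
Qed.

Lemma affine_derive (f : 'rV[R]_d -> R) x v c :
  (forall h : R, f (h *: v + x) - f x = h * c) -> 'D_v f x = c.
Proof.
move=> hf; rewrite /derive.
have : (fun h : R => h^-1 *: ((f \o shift x) (h *: v) - f x)) @ 0^' --> c.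
  apply: cvg_near_cst; near=> h.
  have h0 : h != 0 by near: h; exact: nbhs_dnbhs_neq.
  by rewrite /= /shift hf /GRing.scale /= mulKf.
by move=> /cvg_lim ->.
Unshelve. all: by end_near.
Qed.

Definition zeta (t : R) (w : 'rV[R]_d) (b : R) (x : 'rV[R]_d) := t * (dot x w + b).

Lemma zeta_diff t w b x : differentiable (zeta t w b) x.
Proof.
rewrite /zeta; apply: differentiableM; first exact: differentiable_cst.
apply: differentiableD; last exact: differentiable_cst.
rewrite /dot.
have -> : (fun y : 'rV[R]_d => \sum_(i < d) y ord0 i * w ord0 i) =
          \sum_(i < d) (fun y : 'rV[R]_d => y ord0 i * w ord0 i) by rewrite fct_sumE.
apply: differentiable_sum => i; apply: differentiableM; last exact: differentiable_cst.
exact: differentiable_coord.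
Qed.

Lemma zeta_derive t w b x v : 'D_v (zeta t w b) x = t * dot v w.
Proof.
apply: affine_derive => h; rewrite /zeta dotDl dotZl.
ring.
Qed.

Lemma ez_diff t w b x : differentiable (fun y => expR (zeta t w b y)) x.
Proof. by have [] := @chain (zeta t w b) expR x 0 _ (zeta_diff t w b x) (is_derive_expR _). Qed.

Lemma ez_derive t w b x v :
  'D_v (fun y => expR (zeta t w b y)) x = expR (zeta t w b x) * (t * dot v w).
Proof.
have [_ ->] := @chain (zeta t w b) expR x v _ (zeta_diff t w b x) (is_derive_expR _).
by rewrite zeta_derive.
Qed.

Definition Ssum {n} t (W : 'M[R]_(n, d)) (a : 'rV[R]_n) (x : 'rV[R]_d) :=
  \sum_j expR (zeta t (row j W) (a ord0 j) x).

Lemma Ssum_fun {n} t (W : 'M[R]_(n, d)) a :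
  Ssum t W a = \sum_j (fun y => expR (zeta t (row j W) (a ord0 j) y)).
Proof. by rewrite fct_sumE. Qed.

Lemma Ssum_diff {n} t (W : 'M[R]_(n, d)) a x : differentiable (Ssum t W a) x.
Proof. rewrite Ssum_fun; apply: differentiable_sum => j; exact: ez_diff. Qed.

Lemma Ssum_derive {n} t (W : 'M[R]_(n, d)) a x v :
  'D_v (Ssum t W a) x = \sum_j expR (zeta t (row j W) (a ord0 j) x) * (t * dot v (row j W)).
Proof.
rewrite Ssum_fun derive_sum; last by move=> j; apply: diff_derivable; exact: ez_diff.
by apply: eq_bigr => j _; rewrite ez_derive.
Qed.

Lemma Ssum_gt0 {n} t (W : 'M[R]_(n, d)) a x : (0 < n)%N -> 0 < Ssum t W a x.
Proof.
move=> n0; rewrite /Ssum (bigD1 (Ordinal n0)) //=.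
apply: ltr_pwDl; first exact: expR_gt0.
by apply: sumr_ge0 => j _; exact: expR_ge0.
Qed.

Definition lse {n} t (W : 'M[R]_(n, d)) (a : 'rV[R]_n) (x : 'rV[R]_d) :=
  t^-1 * ln (Ssum t W a x).

Lemma lse_comp {n} t (W : 'M[R]_(n, d)) a :
  lse t W a = (t^-1 *: (@ln R)) \o Ssum t W a.
Proof. by apply: funext => x. Qed.

Lemma lse_chain {n} t (W : 'M[R]_(n, d)) a x v : (0 < n)%N ->
  differentiable (lse t W a) x /\
  'D_v (lse t W a) x = t^-1 * (Ssum t W a x)^-1 * 'D_v (Ssum t W a) x.
Proof.
move=> n0; rewrite lse_comp.
have hd : is_derive (Ssum t W a x : R^o) 1 (t^-1 *: (@ln R)) (t^-1 *: (Ssum t W a x)^-1).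
  apply: is_deriveZ; apply: is_derive1_ln; exact: Ssum_gt0.
exact: (chain _ _ _ v _ (Ssum_diff t W a x) hd).
Qed.

Lemma dot_delta (w : 'rV[R]_d) i : dot (delta_mx ord0 i) w = w ord0 i.
Proof.
rewrite /dot (bigD1 i) //= big1 ?addr0; first by rewrite mxE !eqxx mul1r.
by move=> k /negbTE ki; rewrite mxE ki andbF mul0r.
Qed.

Lemma lse_grad {n} t (W : 'M[R]_(n, d)) a x : t != 0 -> (0 < n)%N ->
  grad (lse t W a) x = softmax_layer t W a 0 x.
Proof.
move=> t0 n0; apply/rowP => i; rewrite /grad mxE.
have [_ ->] := lse_chain t W a x (delta_mx ord0 i) n0.
rewrite Ssum_derive softmax_layerE addr0 summxE.
have eS : \sum_k expR (t * (dot x (row k W) + a ord0 k)) = Ssum t W a x by [].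
rewrite eS mulr_sumr; apply: eq_bigr => j _; rewrite mxE dot_delta.
have S0 := Ssum_gt0 t W a x n0.
move: (Ssum t W a x) S0 => S S0.
rewrite /zeta; move: (expR _) => E; move: (row j W ord0 i) => w.
field; by rewrite t0 gt_eqF.
Qed.

Lemma cont_rV (X : topologicalType) n (f : X -> 'rV[R]_n) :
  (forall j, continuous (fun x => f x ord0 j)) -> continuous f.
Proof.
move=> hf x A [P hP sPA].
have : \forall y \near x, forall i j, P i j (f y i j).
  apply: filter_forall => i; apply: filter_forall => j.
  rewrite (ord1 i); exact: (hf j x _ (hP ord0 j)).
by apply: filterS => y hy; apply: sPA.
Qed.

Lemma softmax_layer_cont {n} t (W : 'M[R]_(n, d)) a c : (0 < n)%N ->
  continuous (softmax_layer t W a c).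
Proof.
move=> n0; apply: cont_rV => j x.
apply: differentiable_continuous.
have -> : (fun y => softmax_layer t W a c y ord0 j) =
   (fun y => \sum_k (expR (zeta t (row k W) (a ord0 k) y) * (Ssum t W a y)^-1 * W k j) + c ord0 j).
  apply: funext => y; rewrite softmax_layerE !mxE summxE; congr (_ + _).
  by apply: eq_bigr => k _; rewrite !mxE.
apply: differentiableD; last exact: differentiable_cst.
rewrite -fct_sumE; apply: differentiable_sum => k.
apply: differentiableM; last exact: differentiable_cst.
apply: differentiableM; first exact: ez_diff.
apply: differentiableV; first exact: Ssum_diff.
by rewrite gt_eqF // Ssum_gt0.
Qed.

End LSE.


Lemma rearr (V : zmodType) (a b c k : V) : a - (b - c) = (c - (0 + k)) - (b - (a + k)).
Proof.
rewrite add0r !opprB !addrA; congr (_ - _); by rewrite addrAC subrK addrC.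
Qed.

Lemma dot0l (R : realType) d (v : 'rV[R]_d) : dot 0 v = 0.
Proof. by rewrite /dot big1 // => i _; rewrite mxE mul0r. Qed.

Theorem theorem2 (R : realType) (d : nat) (delta L : R) (F : 'rV[R]_d -> R) :
  (0 < d)%N -> 0 < delta -> 0 < L ->
  (exists U : set 'rV[R]_d,
      open U /\ cube (- delta) (1 + delta) `<=` U /\
      (forall x, U x -> differentiable F x) /\
      (forall x, U x -> {for x, continuous (grad F)})) ->
  (forall x y, cube (- delta) (1 + delta) x -> cube (- delta) (1 + delta) y ->
      enorm (grad F x - grad F y) <= L * enorm (x - y)) ->
  forall eps : R, 0 < eps ->
  exists (n1 n2 : nat) (t1 t2 : R) (W1 : 'M[R]_(n1, d)) (W2 : 'M[R]_(n2, d))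
         (a1 : 'rV[R]_n1) (a2 : 'rV[R]_n2) (c1 c2 : 'rV[R]_d),
    [/\ (0 < n1)%N /\ (0 < n2)%N, 0 < t1 /\ 0 < t2,
        (exists M : R, M < eps /\
          forall x, cube 0 1 x ->
            enorm (grad F x - (softmax_layer t1 W1 a1 c1 x
                               - softmax_layer t2 W2 a2 c2 x)) <= M) &
        (exists G : 'rV[R]_d -> R,
          (forall x, differentiable G x) /\ continuous (grad G) /\
          forall x, grad G x = softmax_layer t1 W1 a1 c1 x
                               - softmax_layer t2 W2 a2 c2 x)].
Proof.
move=> d0 delta0 L0 [U [oU [sU [dU cU]]]] hLip eps eps0.
have incl x : cube01 x -> cube (- delta) (1 + delta) x.
  by move=> hx i; have /andP[h1 h2] := hx i; apply/andP; split; lra.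
have hdiff : forall x, cube01 x -> differentiable F x.
  by move=> x hx; apply: dU; apply: sU; exact: incl.
have hL : forall x p, cube01 x -> cube01 p ->
    enorm (grad F x - grad F p) <= L * enorm (x - p).
  by move=> x p hx hp; apply: hLip; exact: incl.
have hF := taylor_bound F L (ltW L0) hdiff hL.
pose K := 4 * L.
pose rho := eps / (40 * L).
have rho0 : 0 < rho by rewrite divr_gt0 // mulr_gt0.
pose N := (Num.truncn (6 * d%:R / rho ^+ 2)).+1.
have N0 : 0 < N%:R :> R by rewrite ltr0n.
have hN : 6 * d%:R / rho ^+ 2 < N%:R :> R by exact: truncnS_gt.
pose n := #|{ffun 'I_d -> 'I_N.+1}|.
have n0 : (0 < n)%N by apply/card_gt0P; exists [ffun=> ord0].
pose P : 'I_n -> 'rV[R]_d := fun j => \row_i (((enum_val j) i : nat)%:R / N%:R).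
have hP : forall j, cube01 (P j).
  move=> j i; rewrite mxE; apply/andP; split.
    by rewrite divr_ge0 // ltW.
  rewrite ler_pdivrMr // mul1r ler_nat.
  by have := ltn_ord (enum_val j i); rewrite ltnS.
pose h2 := d%:R * (N%:R^-1 * N%:R^-1) : R.
have Ninv1 : N%:R^-1 <= 1 :> R.
  by rewrite invr_le1 ?unitfE ?gt_eqF // ler1n.
have hh : 6 * h2 <= rho ^+ 2.
  have r20 : 0 < rho ^+ 2 by rewrite exprn_gt0.
  have a1 : 6 * d%:R * N%:R^-1 <= rho ^+ 2.
    rewrite ler_pdivrMr //; have := hN; rewrite ltr_pdivrMr // => /ltW.
    by rewrite [N%:R * _]mulrC.
  have a2 : 0 <= 6 * d%:R * N%:R^-1 :> R by rewrite !mulr_ge0 // ?invr_ge0 ltW.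
  rewrite /h2 mulrA mulrA.
  apply: le_trans a1; rewrite mulrA ler_piMr //.
have hgrid : forall x, cube01 x -> exists m, dot (x - P m) (x - P m) <= h2.
  move=> x hx.
  pose f : {ffun 'I_d -> 'I_N.+1} := [ffun i => inord (Num.truncn (x ord0 i * N%:R))].
  exists (enum_rank f).
  apply: (@le_trans _ _ (\sum_(i < d) (N%:R^-1 * N%:R^-1))); last first.
    by rewrite sumr_const card_ord /h2 mulr_natl.
  apply: ler_sum => i _.
  rewrite !mxE enum_rankK ffunE.
  have /andP[x0 x1] := hx i.
  set y := x ord0 i * N%:R.
  have y0 : 0 <= y by rewrite mulr_ge0 // ltW.
  have yN : y <= N%:R by rewrite /y ler_piMl // ltW.
  have kN : (Num.truncn y < N.+1)%N.
    by rewrite ltnS truncn_le_nat; apply: le_lt_trans yN _; rewrite ltr_nat.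
  rewrite inordK //.
  have /andP[k1 k2] := truncn_itv y0.
  set k := Num.truncn y in k1 k2 *.
  have ex : x ord0 i - k%:R / N%:R = (y - k%:R) * N%:R^-1.
    by rewrite mulrBl /y mulfK // gt_eqF.
  rewrite ex.
  have a0 : 0 <= y - k%:R by rewrite subr_ge0.
  have a1 : y - k%:R <= 1 by move: k2; rewrite -natr1; lra.
  have b0 : 0 <= (y - k%:R) * N%:R^-1 by rewrite mulr_ge0 // invr_ge0 ltW.
  have b1 : (y - k%:R) * N%:R^-1 <= N%:R^-1 by rewrite ler_piMl // invr_ge0 ltW.
  exact: ler_pM.
pose B := n%:R * (5 * L * Num.sqrt d%:R) : R.
have B0 : 0 <= B by rewrite !mulr_ge0 // ?sqrtr_ge0 // ltW.
pose y := 8 * B / eps + 1.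
have y0 : 0 < y by rewrite /y ltr_pwDr // divr_ge0 // ?mulr_ge0 // ltW.
have r20 : 0 < L * rho ^+ 2 by rewrite mulr_gt0 // exprn_gt0.
pose t := y * 2 / (L * rho ^+ 2).
have t0 : 0 < t by rewrite /t !divr_gt0 // mulr_gt0.
have ht : t * (L * rho ^+ 2 / 2) = y.
  by rewrite /t; field; rewrite !gt_eqF.
have hexp : n%:R * (expR (- (t * (L * rho ^+ 2 / 2))) * (5 * L * Num.sqrt d%:R)) <= eps / 8.
  rewrite ht mulrCA -/B expRN mulrC ler_pdivrMr ?expR_gt0 //.
  apply: (@le_trans _ _ (eps / 8 * (1 + y))); last first.
    by rewrite ler_wpM2l ?expR_ge1Dx // divr_ge0 // ltW.
  have -> : eps / 8 * (1 + y) = B + eps / 4 by rewrite /y; field; rewrite gt_eqF.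
  by rewrite lerDl divr_ge0 // ltW.
have h5 : 5 * L * rho = eps / 8 by rewrite /rho; field; rewrite gt_eqF.
have E1 := layer_approx F (grad F) L K n P h2 rho t L0 erefl rho0 t0 hh hP hgrid hF hL.
have hF0 : forall x p : 'rV[R]_d, cube01 x -> cube01 p ->
    `|(fun _ => 0 : R) x - (fun _ => 0 : R) p - dot ((fun _ => 0 : 'rV[R]_d) p) (x - p)|
      <= L * dot (x - p) (x - p).
  by move=> x p _ _; rewrite dot0l !subrr normr0 mulr_ge0 ?dot_ge0 // ltW.
have hL0 : forall x p : 'rV[R]_d, cube01 x -> cube01 p ->
    enorm ((fun _ => 0 : 'rV[R]_d) x - (fun _ => 0 : 'rV[R]_d) p) <= L * enorm (x - p).
  by move=> x p hx hp /=; rewrite subrr enorm0 mulr_ge0 ?enorm_ge0 // ltW.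
have E0 := layer_approx (fun _ => 0 : R) (fun _ => 0 : 'rV[R]_d) L K n P h2 rho t L0
  erefl rho0 t0 hh hP hgrid hF0 hL0.
pose W1 := mkW (fun j => grad F (P j) + K *: P j).
pose a1 := \row_j (F (P j) + K / 2 * dot (P j) (P j) - dot (grad F (P j) + K *: P j) (P j)).
pose W2 := mkW (fun j => 0 + K *: P j).
pose a2 := \row_j (0 + K / 2 * dot (P j) (P j) - dot (0 + K *: P j) (P j)) : 'rV[R]_n.
have tn0 : t != 0 by rewrite gt_eqF.
exists n, n, t, t, W1, W2, a1, a2, 0, 0; split.
- by [].
- by [].
- exists (eps / 2); split; first lra.
  move=> x hx.
  have e1 : enorm (softmax_layer t W1 a1 0 x - (grad F x + K *: x)) <=
     5 * L * rho + n%:R * (expR (- (t * (L * rho ^+ 2 / 2))) * (5 * L * Num.sqrt d%:R))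
     := E1 x hx.
  have e0 : enorm (softmax_layer t W2 a2 0 x - (0 + K *: x)) <=
     5 * L * rho + n%:R * (expR (- (t * (L * rho ^+ 2 / 2))) * (5 * L * Num.sqrt d%:R)).
    have := E0 x hx; rewrite /W2 /a2 /=.
    by [].
  move: e1 e0; set S1 := softmax_layer t W1 a1 0 x; set S2 := softmax_layer t W2 a2 0 x.
  set Q := 5 * L * rho + _ => e1 e0.
  have -> : grad F x - (S1 - S2) = (S2 - (0 + K *: x)) + - (S1 - (grad F x + K *: x)).
    exact: rearr.
  apply: le_trans (enormD _ _) _; rewrite enormN.
  have hQ : Q <= eps / 4 by rewrite /Q; lra.
  lra.
- exists (lse t W1 a1 - lse t W2 a2).
  have gG x : grad (lse t W1 a1 - lse t W2 a2) x =
      softmax_layer t W1 a1 0 x - softmax_layer t W2 a2 0 x.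
    rewrite -(lse_grad t W1 a1 x tn0 n0) -(lse_grad t W2 a2 x tn0 n0).
    apply/rowP => i; rewrite /grad !mxE deriveB //.
      by apply: diff_derivable; exact: (lse_chain t W1 a1 x 0 n0).1.
    by apply: diff_derivable; exact: (lse_chain t W2 a2 x 0 n0).1.
  split; last split.
  + move=> x; apply: differentiableB.
      exact: (lse_chain t W1 a1 x 0 n0).1.
    exact: (lse_chain t W2 a2 x 0 n0).1.
  + have -> : grad (lse t W1 a1 - lse t W2 a2) =
        (softmax_layer t W1 a1 0 - softmax_layer t W2 a2 0) by apply: funext => x; rewrite gG.
    move=> x; apply: continuousB; exact: softmax_layer_cont.
  + exact: gG.
Qed.
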